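(* Let $G$ be a topological group which is SIN, i.e. the identity of $G$ has a neighbourhood base consisting of open sets $V$ invariant under conjugation ($g^{-1}Vg=V$ for all $g\in G$). Let $(X,\mu)$ be a standard Lebesgue (probability) space. Then the topological group $L^0(X,\mu;G)$ is SIN as well.
   Context: For a topological group $G$ and a standard Lebesgue probability space $(X,\mu)$, $L^0(X,\mu;G)$ denotes the group of all $\mu$-a.e. equivalence classes of strongly (Bourbaki) measurable maps $f\colon X\to G$, i.e. maps such that for every $\varepsilon>0$ there is a compact $K\subseteq X$ with $\mu(K)>1-\varepsilon$ on which $f$ is continuous; the group operations are pointwise. It carries the topology of convergence in measure, a neighbourhood base at the identity being formed by the sets $[V,\varepsilon]=\{f\in L^0(X,\mu;G)\colon \mu\{x\in X\colon f(x)\in V\}>1-\varepsilon\}$, where $V$ runs over a neighbourhood base at the identity of $G$ and $\varepsilon>0$. *)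

(* Defs.v *)
From HB Require Import structures.
From mathcomp Require Import all_boot all_order all_algebra.
From mathcomp Require Import all_classical all_reals all_analysis.
Set Implicit Arguments. Unset Strict Implicit. Unset Printing Implicit Defensive.
Import Order.TTheory GRing.Theory Num.Theory.
Local Open Scope classical_set_scope.
Local Open Scope ring_scope.

Record is_topgroup (G : topologicalType) (mul : G -> G -> G) (inv : G -> G)
    (e : G) : Prop := IsTopGroup {
  tg_mulA : forall x y z, mul x (mul y z) = mul (mul x y) z;
  tg_mul1g : forall x, mul e x = x;
  tg_mulVg : forall x, mul (inv x) x = e;
  tg_mul_cont : continuous (fun p : G * G => mul p.1 p.2);
  tg_inv_cont : continuous inv }.

Definition SIN (G : topologicalType) (mul : G -> G -> G) (inv : G -> G) (e : G) :=
  forall U : set G, nbhs e U ->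
    exists V : set G, [/\ open V, V e, V `<=` U &
      forall g : G, [set mul (inv g) (mul v g) | v in V] = V].

(* Polish space: (a Hausdorff complete pseudometric space, hence a complete
   metric space) that is separable. *)
Definition polish {R : realType} (X : completePseudoMetricType R) :=
  hausdorff_space X /\ exists D : set X, countable D /\ dense D.

Section L0.
Context {R : realType} {X : completePseudoMetricType R}.
Local Notation BX := (g_sigma_algebraType (@open X)).
Variable mu : probability BX R.
Context {G : topologicalType} (mul : G -> G -> G) (inv : G -> G) (e : G).

(* "mu A > r" for a possibly non-Borel set A, read in the completion of mu:
   some Borel subset of A has measure > r (inner measure > r). *)
Definition mu_gt (A : set X) (r : R) :=
  exists B : set BX, [/\ measurable B, B `<=` A & (r%:E < mu B)%E].

Definition strongly_measurable (f : X -> G) :=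
  forall eps : R, 0 < eps ->
    exists K : set X, [/\ compact K, mu_gt K (1 - eps) & {within K, continuous f}].

(* representatives of elements of L^0(X,mu;G) *)
Definition L0 : set (X -> G) := [set f | strongly_measurable f].

Definition Lmul (f g : X -> G) : X -> G := fun x => mul (f x) (g x).
Definition Linv (f : X -> G) : X -> G := fun x => inv (f x).
Definition Lone : X -> G := fun _ => e.

Definition Lnbhd0 (V : set G) (eps : R) : set (X -> G) :=
  [set f | L0 f /\ mu_gt [set x | V (f x)] (1 - eps)].

Definition L0_nbhs1 (U : set (X -> G)) :=
  exists V : set G, exists eps : R, [/\ nbhs e V, 0 < eps & Lnbhd0 V eps `<=` U].

Definition L0_open (O : set (X -> G)) :=
  O `<=` L0 /\
  forall f, O f -> exists V : set G, exists eps : R,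
    [/\ nbhs e V, 0 < eps & [set Lmul f h | h in Lnbhd0 V eps] `<=` O].

Definition L0_SIN :=
  forall U : set (X -> G), L0_nbhs1 U ->
    exists O : set (X -> G), [/\ L0_open O, O Lone, O `<=` U &
      forall g, L0 g -> [set Lmul (Linv g) (Lmul h g) | h in O] = O].
End L0.

(* Main.v *)
Require Import Defs.
From HB Require Import structures.
From mathcomp Require Import all_boot all_order all_algebra.
From mathcomp Require Import all_classical all_reals all_analysis.
From mathcomp Require Import ring lra.
Set Implicit Arguments. Unset Strict Implicit. Unset Printing Implicit Defensive.
Import Order.TTheory GRing.Theory Num.Theory.
Local Open Scope classical_set_scope.
Local Open Scope ring_scope.

Lemma ultra_big {T} (F : set_system T) (UF : UltraFilter F) (h : nat -> set T) N :
  F (\bigcup_(k < N) h k) -> exists2 k, (k < N)%N & F (h k).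
Proof.
rewrite bigcup_mkord.
elim: N => [|N IH]; first by rewrite big_ord0 => /filter_not_empty.
rewrite big_ord_recr /=.
case: (in_ultra_setVsetC (\big[setU/set0]_(k < N) h k) UF) => [/IH [k kN Fk] _|FC FU].
  by exists k => //; exact: ltnW.
exists N => //; apply: filterS (filterI FU FC) => x [[Ux|hx] nU] //; by case: nU.
Qed.

Section Tight.
Context {R : realType} {X : completePseudoMetricType R}.
Local Notation BX := (g_sigma_algebraType (@open X)).
Variable mu : probability BX R.

Lemma closed_meas (A : set X) : closed A -> measurable (A : set BX).
Proof.
move=> cA; rewrite -[A]setCK; apply: measurableC.
by apply: sub_sigma_algebra; exact: closed_openC.
Qed.


Lemma X_nonempty : exists x : X, True.
Proof.
case: (pselect (exists x : X, True)) => // nX.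
have E : (setT : set BX) = set0 by apply/seteqP; split => x // _; apply: nX; exists x.
by move: (probability_setT mu); rewrite E measure0 => -[] /eqP; rewrite eq_sym oner_eq0.
Qed.

Lemma cover_seq : polish X -> exists f : nat -> X,
  forall (x : X) (r : R), 0 < r -> exists n, closed_ball (f n) r x.
Proof.
move=> [hX [D [cD dD]]].
have [x0 _] := X_nonempty.
have /countable_injP [g ginj] := cD.
pose f n := xget x0 [set d | D d /\ g d = n].
have fD d : D d -> f (g d) = d.
  move=> Dd; have [] : [set d' | D d' /\ g d' = g d] (f (g d)) by apply: xgetPex; exists d.
  by move=> Dd' gd; apply: ginj; rewrite ?inE.
exists f => x r r0.
have [] := dD (ball x r)° _ (@open_interior _ _); first by exists x; exact: nbhsx_ballx.
move=> d [/interior_subset bxd Dd]; exists (g d); rewrite fD//; apply: subset_closed_ball; exact: ball_sym.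
Qed.

Lemma muE (A : set BX) : measurable A ->
  exists a : R, [/\ mu A = a%:E, 0 <= a, a <= 1 & mu (~` A) = (1 - a)%:E].
Proof.
move=> mA; have h1 := probability_le1 mu mA; have h0 := measure_ge0 mu A.
have fA : mu A \is a fin_num by rewrite ge0_fin_numE// (le_lt_trans h1) ?ltry.
exists (fine (mu A)); rewrite fineK//; split => //.
- by rewrite -lee_fin fineK.
- by rewrite -lee_fin fineK.
- by rewrite probability_setC// EFinB fineK.
Qed.

Lemma tight : polish X -> forall eps : R, 0 < eps ->
  exists K : set X, compact K /\ mu_gt mu K (1 - eps).
Proof.
move=> pX eps eps0.
have [f fcov] := cover_seq pX.
pose r (n : nat) : R := n.+1%:R^-1.
have r0 n : 0 < r n by rewrite invr_gt0.
pose A N n := \bigcup_(k < N) closed_ball (f k) (r n).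
have Acl N n : closed (A N n).
  by rewrite /A bigcup_mkord; apply: closed_bigsetU => k _; exact: closed_ball_closed.
pose del (n : nat) : R := (eps / 2) / (2 ^ n.+1)%:R.
have del0 n : 0 < del n by rewrite divr_gt0 // ?divr_gt0 // ltr0n expn_gt0.
have hN n : exists N, ((1 - del n)%:E < mu (A N n))%E.
  have mAn N : measurable (A N n : set BX) by exact: closed_meas.
  have mU : measurable (\bigcup_N A N n : set BX).
    by apply: bigcup_measurable => N _; exact: closed_meas.
  have ndA : nondecreasing_seq (fun N => A N n).
    by move=> N M NM; apply/subsetPset => x [k /= kN hk]; exists k => //=; exact: leq_trans NM.
  have := @nondecreasing_cvg_mu _ BX R mu (fun N => A N n) mAn mU ndA.
  have E1 : mu (\bigcup_N A N n) = 1%E.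
    have -> : \bigcup_N A N n = setT.
      apply/seteqP; split => // x _; have [k hk] := fcov x (r n) (r0 n).
      by exists k.+1 => //; exists k => //=.
    exact: probability_setT.
  move=> H; have {H} : (mu \o (fun N => A N n)) @ \oo --> (1%E : \bar R) by rewrite -E1; exact: H.
  have H1 : ((1 - del n)%:E < 1)%E by rewrite lte_fin gtrBl.
  move=> /(_ _ (open_ereal_gt' H1)) [N0 _ HN]; exists N0; exact: (HN N0 (leqnn _)).
have [N HN] := choice hN.
pose K := \bigcap_n A (N n) n.
have Kcl : closed K by apply: closed_bigI => n _; exact: Acl.
exists K; split.
  rewrite compact_ultra => F UF FK.
  have Fc : cauchy F.
    apply/cauchy_ballP => _/posnumP[e].
    have [n0 _ Hn] := near_infty_natSinv_lt (e%:num / 4)%:pos.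
    have rn : r n0 <= e%:num / 2 / 2.
      rewrite -mulrA -invfM -natrM; apply/ltW; exact: (Hn n0 (leqnn _)).
    have FA : F (A (N n0) n0) by apply: filterS FK => x /(_ n0 I).
    have [k _ Fk] := ultra_big UF FA.
    exists (closed_ball (f k) (r n0), closed_ball (f k) (r n0)) => //= -[x y] /= [Bx By].
    have hb z : closed_ball (f k) (r n0) z -> ball (f k) (e%:num / 2) z.
      by move=> /(le_closed_ball rn) /subset_closure_half; apply.
    rewrite (splitr e%:num); apply: ball_triangle (ball_sym (hb _ Bx)) (hb _ By).
  have PF : ProperFilter F := @ultra_proper _ F UF.
  have cF : F --> lim F := @cauchy_cvg _ F PF Fc.
  exists (lim F); split; last exact: cF.
  exact: (@closed_cvg _ _ F _ id K Kcl FK (lim F) cF).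
exists K; split => //; first exact: closed_meas.
have mA n : measurable (A (N n) n : set BX) by exact: closed_meas.
have mK : measurable (K : set BX) by exact: closed_meas.
have [a [Ka a0 a1 KCa]] := muE mK.
rewrite Ka lte_fin.
have : (mu (~` K) <= (eps / 2)%:E)%E.
  rewrite /K setC_bigcap.
  apply: le_trans (measure_sigma_subadditive mu (A := \bigcup_n ~` A (N n) n) (F := fun n => ~` A (N n) n) _ _ _) _.
  - by move=> n; exact: measurableC.
  - by apply: bigcup_measurable => n _; exact: measurableC.
  - by move=> x [n _ hx]; exists n.
  apply: le_trans (epsilon_trick0 xpredT _); last by rewrite divr_ge0 // ltW.
  apply: lee_nneseries => [n _ _|n _]; first exact: measure_ge0.
  have [b [Ab b0 b1 ACb]] := muE (mA n).
  rewrite [X in (X <= _)%E](_ : _ = (1 - b)%:E); last exact: ACb.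
  rewrite lee_fin; move: (HN n); rewrite [X in (_ < X)%E](_ : _ = b%:E); last exact: Ab.
  rewrite lte_fin /del => h.
  apply/ltW; move: h; lra.
rewrite KCa lee_fin => h.
have : eps / 2 < eps by rewrite ltr_pdivrMr // ltr_pMr // ltr1n.
lra.
Qed.
End Tight.

Section Main.
Variables (R : realType) (X : completePseudoMetricType R).
Local Notation BX := (g_sigma_algebraType (@open X)).
Variable mu : probability BX R.
Variables (G : topologicalType) (mul : G -> G -> G) (inv : G -> G) (e : G).
Hypothesis TG : is_topgroup mul inv e.
Hypothesis pX : polish X.
Let hX : hausdorff_space X := pX.1.

Let mulA := tg_mulA TG.
Let mul1g := tg_mul1g TG.
Let mulVg := tg_mulVg TG.

Lemma mulgV x : mul x (inv x) = e.
Proof.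
rewrite -[LHS]mul1g -{1}(mulVg (inv x)) -mulA (mulA (inv x) x) mulVg mul1g.
exact: mulVg.
Qed.

Lemma mulg1 x : mul x e = x.
Proof. by rewrite -(mulVg x) mulA mulgV mul1g. Qed.

Lemma invK x : inv (inv x) = x.
Proof. by rewrite -[RHS]mul1g -(mulVg (inv x)) -mulA mulVg mulg1. Qed.

Lemma mulgVK x y : mul (mul x (inv y)) y = x.
Proof. by rewrite -mulA mulVg mulg1. Qed.

Lemma mulgKV x y : mul (mul x y) (inv y) = x.
Proof. by rewrite -mulA mulgV mulg1. Qed.

Definition cnj c v := mul (inv c) (mul v c).

Lemma cnjM a b c : mul (cnj a b) c = cnj a (mul b (cnj (inv a) c)).
Proof. by rewrite /cnj invK !mulA mulgVK. Qed.

Lemma cnjK a b : cnj a (cnj (inv a) b) = b.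
Proof. by rewrite /cnj invK !mulA mulVg mul1g mulgVK. Qed.

Definition inv_set (V : set G) := forall c v, V v -> V (cnj c v).

Lemma mu_gt_sub (A B : set X) r : A `<=` B -> mu_gt mu A r -> mu_gt mu B r.
Proof. by move=> AB [C [mC CA h]]; exists C; split => //; exact: subset_trans AB. Qed.

Lemma mu_gt_T (eps : R) : 0 < eps -> mu_gt mu setT (1 - eps).
Proof.
move=> e0; exists setT; split => //.
rewrite probability_setT lte_fin; lra.
Qed.

Lemma mu_gt_I (A B : set X) a b : mu_gt mu A (1 - a) -> mu_gt mu B (1 - b) ->
  mu_gt mu (A `&` B) (1 - (a + b)).
Proof.
move=> [C [mC CA hC]] [D [mD DB hD]].
exists (C `&` D); split; [exact: measurableI| by move=> x [/CA ? /DB ?]|].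
have [c [Ce c0 c1 cC]] := muE mu mC.
have [d [De d0 d1 dC]] := muE mu mD.
have mCD : measurable (C `&` D) by exact: measurableI.
have [x [xE x0 x1 xC]] := muE mu mCD.
have : (mu (~` (C `&` D)) <= mu (~` C) + mu (~` D))%E.
  by rewrite setCI; apply: measureU2; exact: measurableC.
rewrite xC cC dC -EFinD lee_fin xE lte_fin.
move: hC hD; rewrite Ce De !lte_fin; lra.
Qed.

Lemma sm_mul f g : strongly_measurable mu f -> strongly_measurable mu g ->
  strongly_measurable mu (Lmul mul f g).
Proof.
move=> sf sg eps e0.
have e20 : 0 < eps / 2 by rewrite divr_gt0.
have [K1 [cK1 m1 c1]] := sf _ e20.
have [K2 [cK2 m2 c2]] := sg _ e20.
exists (K1 `&` K2); split.
- by apply: compact_closedI => //; exact: compact_closed.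
- by rewrite {1}(splitr eps); exact: mu_gt_I.
- have c1' := continuous_subspaceW (@subIsetl _ K1 K2) c1.
  have c2' := continuous_subspaceW (@subIsetr _ K1 K2) c2.
  move=> x; apply: continuous2_cvg; [|exact: c1'|exact: c2'].
  exact: (@tg_mul_cont _ _ _ _ TG (f x, g x)).
Qed.

Lemma sm_inv f : strongly_measurable mu f -> strongly_measurable mu (Linv inv f).
Proof.
move=> sf eps e0; have [K [cK m c]] := sf _ e0; exists K; split => // x.
apply: continuous_comp (c x) _; exact: (tg_inv_cont TG).
Qed.


Lemma sm_one : strongly_measurable mu (Lone e).
Proof.
move=> eps e0; have [K [cK mK]] := tight mu pX e0; exists K; split => // x.
exact: cvg_cst.
Qed.

Definition cnjL (g h : X -> G) := Lmul mul (Linv inv g) (Lmul mul h g).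

Lemma LN_sub (V V' : set G) eps : V `<=` V' -> Lnbhd0 mu V eps `<=` Lnbhd0 mu V' eps.
Proof. by move=> VV' h [Lh mh]; split => //; apply: mu_gt_sub mh => x /VV'. Qed.

Lemma LN_conj (V : set G) eps g h : inv_set V -> L0 mu g ->
  Lnbhd0 mu V eps h -> Lnbhd0 mu V eps (cnjL g h).
Proof.
move=> iV Lg [Lh mh]; split.
  by apply: sm_mul; [exact: sm_inv | exact: sm_mul].
by apply: mu_gt_sub mh => x /= Vx; exact: iV.
Qed.

Lemma LN_mul (V V1 V2 : set G) e1 e2 h k :
  (forall a b, V1 a -> V2 b -> V (mul a b)) ->
  Lnbhd0 mu V1 e1 h -> Lnbhd0 mu V2 e2 k -> Lnbhd0 mu V (e1 + e2) (Lmul mul h k).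
Proof.
move=> HV [Lh mh] [Lk mk]; split; first exact: sm_mul.
by apply: mu_gt_sub (mu_gt_I mh mk) => x [/= ? ?]; exact: HV.
Qed.

Lemma LN_one (V : set G) eps : 0 < eps -> V e -> Lnbhd0 mu V eps (Lone e).
Proof.
move=> e0 Ve; split; first exact: sm_one.
by apply: mu_gt_sub (mu_gt_T e0) => x _.
Qed.

Lemma main_sec : SIN mul inv e -> L0_SIN mu mul inv e.
Proof.
move=> sin U [V [eps [nV eps0 sub]]].
have [W [oW We WV hW]] := sin V nV.
have iW : inv_set W by move=> c v Wv; rewrite -(hW c); exists v.
pose O := [set f | L0 mu f /\ exists V' : set G, exists eps' : R,
  [/\ open V', V' e, inv_set V', 0 < eps' &
      forall h, Lnbhd0 mu V' eps' h -> Lnbhd0 mu W eps (Lmul mul f h)]].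
have key g : L0 mu g -> forall h, O h -> O (cnjL g h).
  move=> Lg h [Lh [V' [eps' [oV' V'e iV' e0 H]]]]; split.
    by apply: sm_mul; [exact: sm_inv | exact: sm_mul].
  exists V', eps'; split => // h' h'N.
  have -> : Lmul mul (cnjL g h) h' = cnjL g (Lmul mul h (cnjL (Linv inv g) h')).
    by apply: funext => x; rewrite /cnjL /Lmul /Linv /= -/(cnj _ _) cnjM.
  exact: (LN_conj iW Lg (H _ (LN_conj iV' (sm_inv Lg) h'N))).
exists O; split.
- split; first by move=> f [].
  move=> f [Lf [V' [eps' [oV' V'e iV' e0 H]]]].
  have nV' : nbhs e V' by apply: open_nbhs_nbhs; split.
  have : nbhs (e, e) [set p : G * G | V' (mul p.1 p.2)].
    have nV2 : nbhs (mul (e, e).1 (e, e).2) V' by rewrite /= mul1g.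
    exact: (@tg_mul_cont _ _ _ _ TG (e, e) _ nV2).
  move=> [[A B] /= [nA nB] AB].
  have [V'' [oV'' V''e V''AB hV'']] := sin (A `&` B) (filterI nA nB).
  have iV'' : inv_set V'' by move=> c v Wv; rewrite -(hV'' c); exists v.
  exists V'', (eps' / 2); split.
  + by apply: open_nbhs_nbhs; split.
  + by rewrite divr_gt0.
  move=> _ [h hN <-]; split; first by apply: sm_mul => //; case: hN.
  exists V'', (eps' / 2); split => //; first by rewrite divr_gt0.
  move=> h' h'N.
  have -> : Lmul mul (Lmul mul f h) h' = Lmul mul f (Lmul mul h h').
    by apply: funext => x; rewrite /Lmul mulA.
  apply: H; rewrite (splitr eps'); apply: LN_mul hN h'N.
  by move=> a b /V''AB [Aa _] /V''AB [_ Bb]; exact: (AB (a, b)).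
- split; first exact: sm_one.
  exists W, eps; split => // h hN.
  by have -> : Lmul mul (Lone e) h = h by apply: funext => x; rewrite /Lmul mul1g.
- move=> f [Lf [V' [eps' [oV' V'e iV' e0 H]]]]; apply: sub.
  have := H _ (LN_one e0 V'e).
  have -> : Lmul mul f (Lone e) = f by apply: funext => x; rewrite /Lmul mulg1.
  exact: LN_sub.
- move=> g Lg; apply/seteqP; split; first by move=> _ [h Oh <-]; exact: key.
  move=> h Oh; exists (cnjL (Linv inv g) h); first exact: key (sm_inv Lg) _ Oh.
  by apply: funext => x; rewrite /cnjL /Lmul /Linv /= -!/(cnj _ _) cnjK.
Qed.

End Main.

Unset Implicit Arguments.

Theorem lemma1 (R : realType) (X : completePseudoMetricType R)
  (mu : probability (g_sigma_algebraType (@open X)) R)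
  (G : topologicalType) (mul : G -> G -> G) (inv : G -> G) (e : G) :
  polish X -> is_topgroup mul inv e -> SIN mul inv e ->
  L0_SIN mu mul inv e.
Proof. by move=> pX TG sin; exact: main_sec. Qed.
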